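(* Assume CH. Let $\mathcal{I}$ and $\mathcal{J}$ be ideals such that $\mathcal{I}$ is unboring and $\mathcal{J}\not\leq_K\mathcal{I}|A$ for every $A\notin\mathcal{I}$. Then there is a Mr\'owka space in $\mathrm{FinBW}(\mathcal{I})\setminus\mathrm{FinBW}(\mathcal{J})$.
   Context: An ideal on an infinite countable set $X$ is a family $\mathcal{I}\subseteq\mathcal{P}(X)$ closed under subsets and finite unions, containing all finite subsets, with $X\notin\mathcal{I}$. $\mathcal{I}|A=\{B\cap A:B\in\mathcal{I}\}$. A space $X$ is in $\mathrm{FinBW}(\mathcal{I})$ if $X$ is Hausdorff and for every sequence $(x_n)_{n\in\bigcup\mathcal{I}}$ in $X$ there is $A\notin\mathcal{I}$ with $(x_n)_{n\in A}$ convergent in $X$. $\mathcal{J}\leq_K\mathcal{I}$: there is a function $f:\bigcup\mathcal{I}\to\bigcup\mathcal{J}$ with $f^{-1}[B]\in\mathcal{I}$ for all $B\in\mathcal{J}$ (for restrictions, with $\bigcup\mathcal{I}|A=A$). $\mathrm{Fin}^2$: ideal on $\omega^2$ of all $A$ with only finitely many $n$ such that $\{m:(n,m)\in A\}$ is infinite. $\mathcal{BI}$: ideal on $\omega^3$ of all $A$ for which there is $k$ with $\{(j,l):(i,j,l)\in A\}\in\mathrm{Fin}^2$ for $i<k$ and finite for $i\ge k$. $\mathcal{I}\sqsubseteq\mathcal{J}$: there is a bijection $f:\bigcup\mathcal{J}\to\bigcup\mathcal{I}$ with $f^{-1}[A]\in\mathcal{J}$ for all $A\in\mathcal{I}$.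 $\mathcal{I}$ is unboring if $\mathcal{BI}\not\sqsubseteq\mathcal{I}$. A Mr\'owka space is $\Phi(\mathcal{A})$ for an infinite almost disjoint family $\mathcal{A}$ of infinite subsets of $\omega$: underlying set $\omega\cup\mathcal{A}\cup\{\infty\}$, points of $\omega$ isolated, basic neighbourhoods of $A\in\mathcal{A}$ are $\{A\}\cup(A\setminus F)$ ($F\subseteq\omega$ finite), of $\infty$ are $\{\infty\}\cup(\mathcal{A}\setminus G)\cup(\omega\setminus(F\cup\bigcup G))$ ($F\subseteq\omega$, $G\subseteq\mathcal{A}$ finite). *)

(* Defs.v *)
From mathcomp Require Import all_boot.
From mathcomp Require Import boolp classical_sets functions cardinality.
Set Implicit Arguments. Unset Strict Implicit. Unset Printing Implicit Defensive.
Local Open Scope classical_set_scope.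

Definition CH : Prop :=
  forall S : set (set nat), countable S \/ card_eq S [set: set nat].

Definition is_ideal (X : Type) (I : set (set X)) : Prop :=
  [/\ (forall A B, A `<=` B -> I B -> I A),
      (forall A B, I A -> I B -> I (A `|` B)),
      (forall A, finite_set A -> I A) &
      ~ I [set: X]].

Definition restr (X : Type) (I : set (set X)) (A : set X) : set (set X) :=
  [set B `&` A | B in I].

(* J <=_K I|A : a function f : A -> Y (extended arbitrarily to X) with
   f^{-1}[B] (inside A) in I|A for every B in J. *)
Definition katetov_le_restr (Y X : Type) (J : set (set Y)) (I : set (set X))
  (A : set X) : Prop :=
  exists f : X -> Y, forall B, J B -> restr I A (A `&` f @^-1` B).

Definition Fin2 : set (set (nat * nat)) :=
  [set A | finite_set [set n | infinite_set [set m | A (n, m)]]].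

Definition BI : set (set (nat * (nat * nat))) :=
  [set A | exists k : nat, forall i : nat,
     ((i < k)%N -> Fin2 [set p | A (i, p)]) /\
     ((k <= i)%N -> finite_set [set p | A (i, p)])].

Definition sqle (X Y : Type) (I : set (set X)) (J : set (set Y)) : Prop :=
  exists f : Y -> X, bijective f /\ forall A, I A -> J (f @^-1` A).

Definition unboring (X : Type) (I : set (set X)) : Prop := ~ sqle BI I.

Definition hausdorff_opens (T : Type) (op : set (set T)) : Prop :=
  forall p q : T, p <> q ->
    exists U V, [/\ op U, op V, U p, V q & U `&` V = set0].

Definition conv_on (X T : Type) (op : set (set T)) (x : X -> T) (A : set X)
  (p : T) : Prop :=
  forall U, op U -> U p -> finite_set [set n | A n /\ ~ U (x n)].

Definition FinBW (X T : Type) (I : set (set X)) (op : set (set T)) : Prop :=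
  hausdorff_opens op /\
  forall x : X -> T, exists A, ~ I A /\ exists p, conv_on op x A p.

Definition AD_family (AD : set (set nat)) : Prop :=
  [/\ infinite_set AD,
      (forall B, AD B -> infinite_set B) &
      (forall B C, AD B -> AD C -> B <> C -> finite_set (B `&` C))].

(* Points of the Mrowka space Phi(AD): omega, AD, and infinity *)
Inductive mpt (AD : set (set nat)) : Type :=
| MN of nat
| MA (B : set nat) of AD B
| MInf.
Arguments MN {AD}.
Arguments MInf {AD}.

Definition mbasic (AD : set (set nat)) (p : mpt AD) : set (set (mpt AD)) :=
  match p with
  | MN n => [set [set q | q = MN n]]
  | MA B _ => [set U | exists F : set nat, finite_set F /\
       U = (fun q => match q with
                     | MN m => B m /\ ~ F m
                     | MA C _ => C = B
                     | MInf => False end)]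
  | MInf => [set U | exists (F : set nat) (G : set (set nat)),
       [/\ finite_set F, finite_set G, G `<=` AD &
       U = (fun q => match q with
                     | MN m => ~ F m /\ ~ (exists C, G C /\ C m)
                     | MA C _ => ~ G C
                     | MInf => True end)]]
  end.

Definition mopen (AD : set (set nat)) : set (set (mpt AD)) :=
  [set U | forall p, U p -> exists V, mbasic p V /\ V `<=` U].

(* Main.v *)
Require Import Defs.
From mathcomp Require Import all_boot.
From mathcomp Require Import boolp classical_sets functions cardinality wochoice.
Local Open Scope classical_set_scope.
Set Implicit Arguments. Unset Strict Implicit. Unset Printing Implicit Defensive.


Definition choose_or {T} (d : T) (P : T -> Prop) : T :=
  match pselect (exists x, P x) with
  | left h => proj1_sig (cid h)
  | right _ => d end.

Lemma choose_orP T (d : T) (P : T -> Prop) : (exists x, P x) -> P (choose_or d P).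
Proof. rewrite /choose_or; case: pselect => // h _; exact: (proj2_sig (cid h)). Qed.

Lemma choose_orN T (d : T) (P : T -> Prop) : ~ (exists x, P x) -> choose_or d P = d.
Proof. by rewrite /choose_or; case: pselect. Qed.

Lemma choose_or_cases T (d : T) (P : T -> Prop) :
  P (choose_or d P) \/ choose_or d P = d.
Proof.
case: (pselect (exists x, P x)) => h; first by left; apply: choose_orP.
by right; apply: choose_orN.
Qed.

Lemma idS X (I : set (set X)) A B : is_ideal I -> A `<=` B -> I B -> I A.
Proof. by case=> h _ _ _; apply: h. Qed.
Lemma idU X (I : set (set X)) A B : is_ideal I -> I A -> I B -> I (A `|` B).
Proof. by case=> _ h _ _; apply: h. Qed.
Lemma idF X (I : set (set X)) A : is_ideal I -> finite_set A -> I A.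
Proof. by case=> _ _ h _; apply: h. Qed.
Lemma idT X (I : set (set X)) : is_ideal I -> ~ I [set: X].
Proof. by case. Qed.
Lemma idU3 X (I : set (set X)) A B C : is_ideal I -> A `<=` B `|` C -> I B -> I C -> I A.
Proof. by move=> hI sub IB IC; apply: (idS hI sub); apply: idU. Qed.

Lemma id_nonempty X (I : set (set X)) A : is_ideal I -> ~ I A -> exists x, A x.
Proof.
move=> hI nA; apply: contra_notP nA => nex; apply: idF => //.
suff -> : A = set0 by [].
by apply/seteqP; split=> x // Ax; apply: nex; exists x.
Qed.

Lemma id_infinite X (I : set (set X)) A : is_ideal I -> ~ I A -> infinite_set A.
Proof. by move=> hI nA fA; apply: nA; apply: idF. Qed.

Lemma id_bigU X (I : set (set X)) (F : nat -> set X) n : is_ideal I ->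
  (forall i, (i < n)%N -> I (F i)) -> I [set x | exists i, (i < n)%N /\ F i x].
Proof.
move=> hI; elim: n => [|n IH] h.
  by apply: idF => //; apply: (sub_finite_set _ (finite_set0 X)) => x [i []].
apply: (idU3 hI (B := [set x | exists i, (i < n)%N /\ F i x]) (C := F n)).
- move=> x [i [lt Fx]]; rewrite ltnS leq_eqVlt in lt.
  case/orP: lt => [/eqP <-|lt]; [by right|by left; exists i].
- by apply: IH => i lt; apply: h; apply: ltnW.
- exact: h.
Qed.

Lemma id_seqU X (I : set (set X)) (s : seq (set X)) : is_ideal I ->
  (forall C, C \in s -> I C) -> I [set x | exists C, C \in s /\ C x].
Proof.
move=> hI; elim: s => [|C s IH] h.
  by apply: idF => //; apply: (sub_finite_set _ (finite_set0 X)) => x [C []].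
apply: (idU3 hI (B := C) (C := [set x | exists C, C \in s /\ C x])).
- move=> x [D [Ds Dx]]; rewrite in_cons in Ds; case/orP: Ds => [/eqP <-|Ds]; [by left|by right; exists D].
- by apply: h; rewrite in_cons eqxx.
- by apply: IH => D Ds; apply: h; rewrite in_cons Ds orbT.
Qed.

Lemma fin_bound (A : set nat) : finite_set A -> exists N, forall n, A n -> (n < N)%N.
Proof.
move=> /finite_seqP[s ->]; exists (\max_(x <- s) x).+1 => n /= ns.
by rewrite ltnS; apply: leq_bigmax_seq.
Qed.

Lemma bound_fin (A : set nat) N : (forall n, A n -> (n < N)%N) -> finite_set A.
Proof. by move=> h; apply: (sub_finite_set _ (finite_II N)) => n /h. Qed.

Lemma fin_preimage_inj T U (f : T -> U) (B : set U) : injective f ->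
  finite_set B -> finite_set [set x | B (f x)].
Proof.
move=> finj fB.
have [[x0 _]|ne] := pselect (exists x, B (f x)); last first.
  apply: (sub_finite_set _ (finite_set0 T)) => x Bx; apply: ne; by exists x.
pose g y := choose_or x0 (fun x => f x = y).
apply: (sub_finite_set (B := g @` B)); last exact: finite_image.
move=> x Bx; exists (f x) => //; rewrite /g.
have := choose_orP x0 (ex_intro (fun z => f z = f x) x erefl).
by move/finj.
Qed.

Lemma fin_union T I (D : set I) (F : I -> set T) : finite_set D ->
  (forall i, D i -> finite_set (F i)) -> finite_set [set x | exists i, D i /\ F i x].
Proof.
move=> fD fF; apply: (sub_finite_set _ (bigcup_finite fD fF)).
by move=> x [i [Di Fx]]; exists i.
Qed.

Fixpoint rk (S : set nat) (n : nat) : nat :=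
  if n is n'.+1 then (rk S n' + `[< S n' >])%N else 0%N.

Lemma rk_mono S m n : (m <= n)%N -> (rk S m <= rk S n)%N.
Proof.
elim: n => [|n IH]; first by rewrite leqn0 => /eqP ->.
rewrite leq_eqVlt => /orP[/eqP ->//|]; rewrite ltnS => /IH h /=.
exact: (leq_trans h (leq_addr _ _)).
Qed.

Lemma rk_lt S m n : S m -> (m < n)%N -> (rk S m < rk S n)%N.
Proof.
move=> Sm lt; apply: (@leq_trans (rk S m.+1)); last exact: rk_mono.
by rewrite /= (asboolT Sm) addn1.
Qed.

Lemma rk_bound S m n : S m -> (rk S n <= rk S m)%N -> (n <= m)%N.
Proof.
move=> Sm h; rewrite leqNgt; apply/negP => lt.
by have := rk_lt Sm lt; rewrite ltnNge h.
Qed.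

Lemma rk_inj S m n : S m -> S n -> rk S m = rk S n -> m = n.
Proof.
move=> Sm Sn e; apply/eqP; rewrite eqn_leq.
by rewrite (rk_bound Sn (n := m)) ?e // (rk_bound Sm (n := n)) ?e.
Qed.

Lemma infinite_above (S : set nat) : infinite_set S -> forall n, exists m, (n <= m)%N /\ S m.
Proof.
move=> iS n; apply: contra_notP iS => h; apply: (bound_fin (N := n)) => m Sm.
rewrite ltnNge; apply/negP => le; apply: h; by exists m.
Qed.

Lemma rk_unb S : infinite_set S -> forall j, exists n, (j <= rk S n)%N.
Proof.
move=> iS; elim=> [|j [n h]]; first by exists 0%N.
have [m [le Sm]] := infinite_above iS n.
exists m.+1; rewrite /= (asboolT Sm) addn1 ltnS.
exact: (leq_trans h (rk_mono S le)).
Qed.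

Lemma rk_surj S : infinite_set S -> forall j, exists m, S m /\ rk S m = j.
Proof.
move=> iS j; have [n h] := rk_unb iS j.+1.
have ex : exists n, (j < rk S n)%N by exists n.
pose n0 := ex_minn ex.
have [n1 P1 min1] := ex_minnP ex.
case: n1 P1 min1 => [|n1] P1 min1; first by [].
have le : (rk S n1 <= j)%N.
  by rewrite leqNgt; apply/negP => /min1; rewrite ltnn.
move: P1; rewrite /=; case: (asboolP (S n1)) => Sn1; last by rewrite addn0 ltnNge le.
rewrite addn1 ltnS => le2; exists n1; split => //; apply/eqP; rewrite eqn_leq le le2.
by [].
Qed.


Lemma inj_infinite T U (f : T -> U) (A : set T) : injective f -> infinite_set A ->
  infinite_set (f @` A).
Proof.
move=> fi iA fA; apply: iA; apply: (sub_finite_set _ (fin_preimage_inj fi fA)).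
by move=> x Ax; exists x.
Qed.

Lemma fin_notinf T (A : set T) : ~ infinite_set A -> finite_set A.
Proof. by move=> h; apply: contra_notP h. Qed.

Lemma reg_boring X (I : set (set X)) (iota : X -> nat) (c b : X -> nat) :
  is_ideal I -> injective iota ->
  (forall i j, infinite_set [set x | c x = i /\ b x = j]) ->
  (forall i j, I [set x | c x = i /\ b x = j]) ->
  (forall i A, (forall x, A x -> c x = i) ->
     (forall j, finite_set [set x | A x /\ b x = j]) -> I A) ->
  (forall A, (forall i, finite_set [set x | A x /\ c x = i]) -> I A) ->
  sqle BI I.
Proof.
move=> hI iotai R0 R1 R2 R3.
pose blk i j := [set x | c x = i /\ b x = j].
pose T i j := iota @` blk i j.
have Tinf i j : infinite_set (T i j) by exact: (inj_infinite iotai (R0 i j)).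
pose psi x := (c x, (b x, rk (T (c x) (b x)) (iota x))).
have psi_inj : injective psi.
  move=> x y; rewrite /psi => -[ec eb el]; apply: iotai; move: el; rewrite ec eb.
  apply: rk_inj; [by exists x | by exists y].
have psi_surj : forall p, exists x, psi x = p.
  move=> [i [j l]]; have [m [[x [cx bx] <-] rm]] := rk_surj (Tinf i j) l.
  by exists x; rewrite /psi cx bx rm.
have [x0 _] := psi_surj (0, (0, 0))%N.
pose g p := choose_or x0 (fun x => psi x = p).
have gK : forall p, psi (g p) = p by move=> p; exact: (choose_orP x0 (psi_surj p)).
exists psi; split.
  exists g => [x|p]; last exact: gK.
  by apply: psi_inj; rewrite gK.
move=> B [k hk].
have finpsi : forall S, finite_set S -> finite_set [set x | S (psi x)].
  by move=> S fS; apply: fin_preimage_inj.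
apply: (idU3 hI (B := [set x | exists i, (i < k)%N /\ (B (psi x) /\ c x = i)])
                (C := [set x | B (psi x) /\ (k <= c x)%N])).
- move=> x /= Bx; case: (ltnP (c x) k) => h; [by left; exists (c x) | by right].
- apply: id_bigU => // i ltik.
  have [fin2 _] := hk i; have := fin2 ltik; rewrite /Fin2 /= => /fin_bound [N hN].
  apply: (idU3 hI (B := [set x | exists j, (j < N)%N /\ blk i j x])
                  (C := [set x | (B (psi x) /\ c x = i) /\ (N <= b x)%N])).
  + move=> x [Bx cx]; case: (ltnP (b x) N) => h; [left; exists (b x) | right] => //.
  + apply: id_bigU => // j _; exact: R1.
  + apply: (R2 i) => [x [[_ ->]]//|j].
    case: (ltnP j N) => hj.
      apply: (sub_finite_set _ (finite_set0 X)) => x [[_ bx] ej].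
      by move: bx; rewrite ej leqNgt hj.
    have fj : finite_set [set l | B (i, (j, l))].
      apply: fin_notinf => inf; have := hN j inf; by rewrite ltnNge hj.
    apply: (sub_finite_set _ (finpsi _ (finite_image (fun l => (i, (j, l))) fj))).
    move=> x [[[Bx cx] _] bx].
    have E : psi x = (i, (j, (psi x).2.2)) by rewrite /psi /= cx bx.
    by exists (psi x).2.2; rewrite /= -E.
- apply: R3 => i; case: (ltnP i k) => hik.
    apply: (sub_finite_set _ (finite_set0 X)) => x [[_ kc] ci].
    by move: kc; rewrite ci leqNgt hik.
  have [_ fin] := hk i; have := fin hik => fi.
  apply: (sub_finite_set _ (finpsi _ (finite_image (fun q => (i, q)) fi))).
  move=> x [[Bx _] ci].
  have E : psi x = (i, (psi x).2) by rewrite /psi /= ci.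
  by exists (psi x).2; rewrite /= -E.
Qed.


Definition fto X (v : X -> nat) (A : set X) :=
  forall m, finite_set [set x | A x /\ v x = m].

Lemma empty_fin T (A : set T) : (forall x, ~ A x) -> finite_set A.
Proof. by move=> h; apply: (sub_finite_set _ (finite_set0 T)) => x /h. Qed.

Lemma id_empty X (I : set (set X)) A : is_ideal I -> (forall x, ~ A x) -> I A.
Proof. by move=> hI h; apply: idF => //; apply: empty_fin. Qed.

Lemma atoms_boring X (I : set (set X)) (iota : X -> nat) (a : X -> nat) :
  is_ideal I -> injective iota ->
  (forall n, I [set x | a x = n]) ->
  (forall A, (forall n, finite_set [set x | A x /\ a x = n]) -> I A) ->
  sqle BI I.
Proof.
move=> hI iotai AI Q.
pose S := [set n | infinite_set [set x | a x = n]].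
have LI : I [set x | ~ S (a x)].
  apply: Q => n; case: (pselect (S n)) => Sn.
    by apply: empty_fin => x [nS an]; apply: nS; rewrite an.
  by apply: (sub_finite_set _ (fin_notinf Sn)) => x [].
have Sinf : infinite_set S.
  move=> /fin_bound [NS hNS]; apply: (idT hI).
  apply: (idU3 hI (B := [set x | exists n, (n < NS)%N /\ a x = n]) (C := [set x | ~ S (a x)])) => //.
  - move=> x _; case: (pselect (S (a x))) => h; [left; exists (a x); split => //; exact: hNS | by right].
  - by apply: (id_bigU (F := fun n => [set x | a x = n])).
pose pi n : nat * nat := odflt (n, 0%N) (pickle_inv n).
have pi_bound : forall k p, pi k = p -> (k <= maxn (pickle p) p.1)%N.
  move=> k p; rewrite /pi; have H := @pickle_invK (nat * nat)%type k.
  case E: (pickle_inv k) H => [q|] /= H <-; first by rewrite H leq_maxl.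
  by rewrite /= leq_maxr.
pose c x := if `[< S (a x) >] then (pi (rk S (a x))).1 else 0%N.
pose b x := if `[< S (a x) >] then (pi (rk S (a x))).2 else 0%N.
have R23 : forall A, (forall i j, finite_set [set x | A x /\ (c x = i /\ b x = j)]) -> I A.
  move=> A h; apply: Q => n; case: (pselect (S n)) => Sn; last first.
    by apply: (sub_finite_set _ (fin_notinf Sn)) => x [].
  apply: (sub_finite_set _ (h (pi (rk S n)).1 (pi (rk S n)).2)).
  by move=> x [Ax an]; split => //; rewrite /c /b an (asboolT Sn).
apply: (reg_boring hI iotai (c := c) (b := b)).
- move=> i j; have [n [Sn rn]] := rk_surj Sinf (pickle (i, j)).
  apply: (sub_infinite_set _ Sn) => x /= an.
  by rewrite /c /b an (asboolT Sn) rn /pi pickleK_inv.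
- move=> i j; have [ms [Sms rms]] := rk_surj Sinf (maxn (pickle (i, j)) i).
  apply: (idU3 hI (B := [set x | ~ S (a x)]) (C := [set x | exists n, (n < ms.+1)%N /\ a x = n])) => //.
  + move=> x [cx bx]; case: (pselect (S (a x))) => Sx; [right | by left].
    exists (a x); split => //; rewrite ltnS; apply: (rk_bound Sms); rewrite rms.
    move: cx bx; rewrite /c /b (asboolT Sx) => cx bx.
    by have := pi_bound (rk S (a x)) (i, j); rewrite -cx -bx -surjective_pairing; apply.
  + by apply: (id_bigU (F := fun n => [set x | a x = n])).
- move=> i A Ai Aj; apply: R23 => i' j.
  by apply: (sub_finite_set _ (Aj j)) => x [Ax [_ bx]].
- move=> A Ac; apply: R23 => i j.
  by apply: (sub_finite_set _ (Ac i)) => x [Ax [cx _]].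
Qed.


Lemma boring_of X (I : set (set X)) (iota : X -> nat) (v : X -> nat) (grp : nat -> nat) :
  is_ideal I -> injective iota ->
  (forall m, I [set x | v x = m]) ->
  (forall A g, fto v A -> (forall x, A x -> grp (v x) = g) -> I A) ->
  (forall A, fto v A -> (forall g, finite_set [set x | A x /\ grp (v x) = g]) -> I A) ->
  sqle BI I.
Proof.
move=> hI iotai H1 H2 H3.
pose big m := infinite_set [set x | v x = m].
pose rich g := infinite_set [set m | big m /\ grp m = g].
have F2 : forall g, I [set x | grp (v x) = g /\ ~ big (v x)].
  move=> g; apply: (H2 _ g) => [m|x []//].
  case: (pselect (big m)) => bm.
    by apply: empty_fin => x [[_ nb] vm]; apply: nb; rewrite vm.
  by apply: (sub_finite_set _ (fin_notinf bm)) => x [].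
have F1 : forall g, ~ rich g -> I [set x | grp (v x) = g].
  move=> g /fin_notinf /fin_bound [N hN].
  apply: (idU3 hI (B := [set x | exists m, (m < N)%N /\ [set x | v x = m] x])
                  (C := [set x | grp (v x) = g /\ ~ big (v x)])) => //.
  - move=> x gx; case: (pselect (big (v x))) => bx; [left | by right].
    by exists (v x); split => //; apply: hN.
  - by apply: id_bigU.
have F1' : forall g, I [set x | ~ rich g /\ grp (v x) = g].
  move=> g; case: (pselect (rich g)) => rg.
    by apply: id_empty => // x [].
  by apply: (idS hI _ (F1 g rg)) => x [].
case: (pselect (infinite_set rich)) => Rinf.
-
  pose bsel m := [set m' | big m' /\ grp m' = grp m].
  pose cond x := rich (grp (v x)) /\ big (v x).
  pose c x := rk rich (grp (v x)).
  pose b x := if `[< cond x >] then rk (bsel (v x)) (v x) else 0%N.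
  have gi : forall i, exists g, rich g /\ rk rich g = i by apply: rk_surj.
  apply: (reg_boring hI iotai (c := c) (b := b)).
  + move=> i j; have [g [rg rgi]] := gi i.
    have [m [[bm gm] rm]] := rk_surj rg j.
    apply: (sub_infinite_set _ bm) => x /= vx.
    have cx : cond x by rewrite /cond vx gm.
    rewrite /c /b (asboolT cx) vx gm rgi; split => //.
    by rewrite /bsel gm.
  + move=> i j; have [g [rg rgi]] := gi i.
    pose P1 := [set x | (cond x /\ c x = i) /\ b x = j].
    have P1I : I P1.
      case: (pselect (exists x, P1 x)) => [[x0 Px0]|ne]; last first.
        by apply: id_empty => // x Px; apply: ne; exists x.
      apply: (idS hI _ (H1 (v x0))) => x Px /=.
      have key : forall y, P1 y -> grp (v y) = g /\ rk (bsel (v y)) (v y) = j.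
        move=> y [[cy ciy] bj]; split.
          by apply: (rk_inj (S := rich)); [case: cy | | rewrite rgi].
        by move: bj; rewrite /b (asboolT cy).
      have [gx rx] := key x Px; have [gx0 rx0] := key x0 Px0.
      apply: (rk_inj (S := [set m' | big m' /\ grp m' = g])).
      * by case: Px => [[[_ ?] _] _]; split.
      * by case: Px0 => [[[_ ?] _] _]; split.
      * by move: rx rx0; rewrite /bsel gx gx0 => -> ->.
    apply: (idU3 hI (B := P1) (C := [set x | grp (v x) = g /\ ~ big (v x)] `|`
                      [set x | exists g', (g' < g.+1)%N /\ [set x | ~ rich g' /\ grp (v x) = g'] x])) => //.
    * move=> x [cx bx]; case: (pselect (cond x)) => hc; [by left|right].
      case: (pselect (rich (grp (v x)))) => rx.
        left; split; first by apply: (rk_inj rx rg); rewrite rgi.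
        by move=> bgx; apply: hc.
      right; exists (grp (v x)); split => //.
      by rewrite ltnS; apply: (rk_bound rg); rewrite rgi -cx.
    * apply: idU => //; apply: (id_bigU (F := fun g' => [set x | ~ rich g' /\ grp (v x) = g'])) => //.
  + move=> i A Ai Aj; have [g [rg rgi]] := gi i.
    apply: (idU3 hI (B := [set x | A x /\ b x = 0%N]) (C := [set x | A x /\ cond x])).
    * move=> x Ax; case: (pselect (cond x)) => hc; [by right | left].
      by split => //; rewrite /b (asboolF hc).
    * by apply: idF => //; apply: Aj.
    * apply: (H2 _ g) => [m|x [Ax [rx _]]].
        apply: (sub_finite_set _ (Aj (rk (bsel m) m))) => x [[Ax hc] vm].
        by split => //; rewrite /b (asboolT hc) vm.
      by apply: (rk_inj rx rg); rewrite rgi -(Ai x Ax).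
  + move=> A Ac; apply: H3 => [m|g].
      apply: (sub_finite_set _ (Ac (rk rich (grp m)))) => x [Ax vm].
      by split => //; rewrite /c vm.
    apply: (sub_finite_set _ (Ac (rk rich g))) => x [Ax gx].
    by split => //; rewrite /c gx.
-
  have [NR hNR] := fin_bound (fin_notinf Rinf).
  pose a' m := if `[< rich (grp m) /\ big m >] then m.*2.+1 else (grp m).*2.
  apply: (atoms_boring hI iotai (a := fun x => a' (v x))).
  + move=> n.
    apply: (idU3 hI (B := [set x | v x = n./2])
       (C := [set x | grp (v x) = n./2 /\ ~ big (v x)] `|` [set x | ~ rich n./2 /\ grp (v x) = n./2])).
    * move=> x /=; rewrite /a'; case: (pselect (rich (grp (v x)) /\ big (v x))) => hc.
        by rewrite (asboolT hc) => <-; left; rewrite /= uphalf_double.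
      rewrite (asboolF hc) => <-; right; rewrite doubleK.
      case: (pselect (big (v x))) => bx; [right | by left].
      by split => // rx; apply: hc.
    * exact: H1.
    * by apply: idU.
  + move=> A hA.
    have ftoA : fto v A.
      move=> m; apply: (sub_finite_set _ (hA (a' m))) => x [Ax vm].
      by split => //=; rewrite vm.
    apply: (idU3 hI (B := [set x | A x /\ ~ rich (grp (v x))])
                    (C := [set x | exists g, (g < NR)%N /\ [set x | A x /\ grp (v x) = g] x])).
    * move=> x Ax; case: (pselect (rich (grp (v x)))) => rx; [right | by left].
      by exists (grp (v x)); split => //; apply: hNR.
    * apply: H3 => [m|g].
        by apply: (sub_finite_set _ (ftoA m)) => x [[]].
      apply: (sub_finite_set _ (hA g.*2)) => x [[Ax rx] gx]; split => //.
      have hc : ~ (rich (grp (v x)) /\ big (v x)) by case.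
      by rewrite /= /a' (asboolF hc) gx.
    * apply: (id_bigU (F := fun g => [set x | A x /\ grp (v x) = g])) => // g _.
      apply: (H2 _ g) => [m|x []//].
      by apply: (sub_finite_set _ (ftoA m)) => x [[]].
Qed.


Definition imgl X (h : X -> nat + nat) (A : set X) : set nat :=
  [set m | exists x, A x /\ h x = inl m].
Definition hfto X (h : X -> nat + nat) (A : set X) :=
  forall z, finite_set [set x | A x /\ h x = z].
Definition good_c1 X Y (I : set (set X)) (J : set (set Y)) (e : Y -> nat)
  (c : nat -> set nat) (h : X -> nat + nat) (A : set X) : Prop :=
  [/\ ~ I A, (forall x, A x -> exists m, h x = inl m), hfto h A,
      J (e @^-1` imgl h A) & forall k, finite_set (imgl h A `&` c k)].

Definition lst (P : nat -> Prop) : nat :=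
  choose_or 0%N (fun k => P k /\ forall k', P k' -> (k <= k')%N).

Lemma lst_spec P : (exists k, P k) -> P (lst P) /\ forall k', P k' -> (lst P <= k')%N.
Proof.
move=> ex; apply: (@choose_orP _ 0%N (fun k => P k /\ forall k', P k' -> (k <= k')%N)).
have ex' : exists k, [pred k | `[< P k >]] k by case: ex => k Pk; exists k; apply/asboolP.
have [k Pk mk] := ex_minnP ex'; exists k; split; first by apply/asboolP.
by move=> k' Pk'; apply: mk; apply/asboolP.
Qed.

Lemma shrink X Y (I : set (set X)) (J : set (set Y)) (e : Y -> nat) (g : nat -> Y)
  (c : nat -> set nat) (h : X -> nat + nat) (A : set X) :
  is_ideal I -> is_ideal J ->
  (forall A, ~ I A -> ~ katetov_le_restr J I A) -> (forall y, g (e y) = y) ->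
  ~ I A -> (forall x, A x -> exists m, h x = inl m) -> hfto h A ->
  (forall k, finite_set (imgl h A `&` c k)) ->
  exists A', good_c1 I J e c h A'.
Proof.
move=> hI hJ hK ge nA Al Af Ad.
pose f x := match h x with inl m => g m | inr _ => g 0%N end.
have [B [JB nB]] : exists B, J B /\ ~ restr I A (A `&` f @^-1` B).
  apply: contra_notP (hK A nA) => hn; exists f => B JB.
  by apply: contra_notP hn => hr; exists B.
have nA' : ~ I (A `&` f @^-1` B).
  move=> IA'; apply: nB; exists (A `&` f @^-1` B) => //.
  by apply/seteqP; split => x; [case=> [] [] | move=> [Ax fx]].
exists (A `&` f @^-1` B); split => //.
- by move=> x [Ax _]; apply: Al.
- by move=> z; apply: (sub_finite_set _ (Af z)) => x [[Ax _] hx].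
- apply: (idS hJ _ JB) => y [x [[Ax fx] hx]].
  by move: fx; rewrite /f /= hx ge.
- move=> k; apply: (sub_finite_set _ (Ad k)) => m [[x [[Ax _] hx]] cm].
  by split => //; exists x.
Qed.

Lemma stepS X Y (I : set (set X)) (J : set (set Y)) (e : Y -> nat) (g : nat -> Y)
  (iota : X -> nat) (c : nat -> set nat) (h : X -> nat + nat) :
  is_ideal I -> is_ideal J -> unboring I ->
  (forall A, ~ I A -> ~ katetov_le_restr J I A) ->
  injective iota -> (forall y, g (e y) = y) ->
  (exists z, ~ I [set x | h x = z]) \/
  (exists k A, [/\ ~ I A, hfto h A & forall x, A x -> exists m, h x = inl m /\ c k m]) \/
  (exists A, good_c1 I J e c h A) \/
  (exists A, [/\ ~ I A, hfto h A & forall x, A x -> exists k, h x = inr k]).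
Proof.
move=> hI hJ unb hK iotai ge.
have [Ha|Ha] := pselect (exists z, ~ I [set x | h x = z]); first by left.
right; have [Hb|Hb] := pselect (exists k A, [/\ ~ I A, hfto h A &
   forall x, A x -> exists m, h x = inl m /\ c k m]); first by left.
right; have [Hc|Hc] := pselect (exists A, good_c1 I J e c h A); first by left.
right; apply: contra_notP unb => Hd.
pose v x := match h x with inl m => m.*2 | inr k => k.*2.+1 end.
pose grp n := if odd n then 0%N else
   if `[< exists k, c k n./2 >] then (lst (fun k => c k n./2)).+2 else 1%N.
have vinj : forall x y, v x = v y -> h x = h y.
  move=> x y; rewrite /v; case: (h x) => [m|k]; case: (h y) => [m'|k'].
  - by move=> /(congr1 half); rewrite !doubleK => ->.
  - by move=> /(congr1 odd); rewrite /= !odd_double.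
  - by move=> /(congr1 odd); rewrite /= !odd_double.
  - by move=> [] /(congr1 half); rewrite !doubleK => ->.
have hftoP : forall A, fto v A -> hfto h A.
  move=> A fA z; case: (pselect (exists x0, A x0 /\ h x0 = z)) => [[x0 [_ hx0]]|ne].
    apply: (sub_finite_set _ (fA (v x0))) => x [Ax hx]; split => //.
    by rewrite /v hx -hx0.
  by apply: empty_fin => x [Ax hx]; apply: ne; exists x.
have grp_inr : forall x k, h x = inr k -> grp (v x) = 0%N.
  by move=> x k hx; rewrite /grp /v hx /= odd_double.
have grp_inl : forall x m, h x = inl m -> grp (v x) =
   if `[< exists k, c k m >] then (lst (fun k => c k m)).+2 else 1%N.
  by move=> x m hx; rewrite /grp /v hx odd_double doubleK.
apply: (boring_of hI iotai (v := v) (grp := grp)).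
- move=> n; case: (pselect (exists x0, v x0 = n)) => [[x0 vx0]|ne].
    have := Ha; move=> /forallNP /(_ (h x0)) /contrapT Ih.
    by apply: (idS hI _ Ih) => x /= vx; apply: vinj; rewrite vx vx0.
  by apply: id_empty => // x vx; apply: ne; exists x.
- move=> A gg fA Ag; apply: contrapT => nA.
  case: gg Ag => [|[|k]] Ag.
  + apply: Hd; exists A; split => // [|x Ax]; first exact: hftoP.
    move: (Ag x Ax); case hx: (h x) => [m|k]; last by exists k.
    by rewrite (grp_inl _ _ hx); case: ifP.
  + apply: Hc; apply: (shrink hI hJ hK ge nA) => [x Ax||k].
    * move: (Ag x Ax); case hx: (h x) => [m|k]; first by exists m.
      by rewrite (grp_inr _ _ hx).
    * exact: hftoP.
    * apply: empty_fin => m [[x [Ax hx]] ckm].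
      move: (Ag x Ax); rewrite (grp_inl _ _ hx).
      by rewrite (asboolT (ex_intro (fun k => c k m) k ckm)).
  + apply: Hb; exists k, A; split => //; first exact: hftoP.
    move=> x Ax; move: (Ag x Ax); case hx: (h x) => [m|k']; last first.
      by rewrite (grp_inr _ _ hx).
    rewrite (grp_inl _ _ hx); case: (pselect (exists k, c k m)) => ex.
      rewrite (asboolT ex) => -[<-]; exists m; split => //.
      by have [] := lst_spec ex.
    by rewrite (asboolF ex).
- move=> A fA Ag.
  apply: (idU3 hI (B := [set x | A x /\ exists k, h x = inr k])
                  (C := [set x | A x /\ exists m, h x = inl m])).
  + move=> x Ax; case hx: (h x) => [m|k]; [right; split => //; by exists m | left; split => //; by exists k].
  + apply: idF => //; apply: (sub_finite_set _ (Ag 0%N)) => x [Ax [k hk]].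
    by split => //; apply: (grp_inr _ _ hk).
  + apply: contrapT => nA; apply: Hc; apply: (shrink hI hJ hK ge nA) => [x [_ //]||k].
      by apply: hftoP => m; apply: (sub_finite_set _ (fA m)) => x [[]].
    pose val x := match h x with inl m => m | inr _ => 0%N end.
    have fU : finite_set [set x | exists k', [set k' | (k' < k.+1)%N] k' /\
                                  [set x | A x /\ grp (v x) = k'.+2] x].
      apply: fin_union => [|k' _]; last exact: Ag.
      by apply: (bound_fin (N := k.+1)).
    apply: (sub_finite_set _ (finite_image val fU)) => m [[x [[Ax _] hx]] ckm].
    have ex : exists k, c k m by exists k.
    exists x; last by rewrite /val hx.
    exists (lst (fun k => c k m)); split; last by split => //; rewrite (grp_inl _ _ hx) (asboolT ex).
    by rewrite /= ltnS; have [_ ] := lst_spec ex; apply.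
Qed.


Lemma index_exists (P : Type) (s0 : set nat -> P) :
  (forall p, exists S, s0 S = p) -> CH ->
  exists (lt : set nat -> set nat -> Prop) (Dm : set (set nat)) (s : set nat -> P),
  [/\ well_founded lt,
      (forall q, Dm q -> countable [set r | lt r q] /\ forall r, lt r q -> Dm r),
      (forall q r, Dm q -> Dm r -> q = r \/ lt q r \/ lt r q) &
      (forall p, exists q, Dm q /\ s q = p)].
Proof.
move=> s0s ch.
have [R wo] := well_ordering_principle (set nat).
have minP : forall Q : set (set nat), (exists x, Q x) ->
    exists z, Q z /\ forall x, Q x -> R z x.
  move=> Q [x Qx]; have ne : nonempty [pred y | `[< Q y >]].
    by exists x; rewrite inE.
  have [z [[zA lb] _]] := wo _ ne; exists z; split; first by move: zA; rewrite inE.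
  by move=> y Qy; apply: lb; rewrite inE.
have Rrefl : forall x, R x x.
  by move=> x; have [z [-> h]] := minP (fun y => y = x) (ex_intro _ x erefl); apply: h.
have Rtot : forall x y, R x y \/ R y x.
  move=> x y; have [z [[->|->] h]] := minP (fun u => u = x \/ u = y) (ex_intro _ x (or_introl erefl)).
    by left; apply: h; right.
  by right; apply: h; left.
have Ranti : forall x y, R x y -> R y x -> x = y.
  move=> x y rxy ryx.
  have ne : nonempty [pred u | `[< u = x \/ u = y >]].
    by exists x; rewrite inE; left.
  have [z [_ uniq]] := wo _ ne.
  have mx : minimum_of R [pred u | `[< u = x \/ u = y >]] x.
    split; first by rewrite inE; left.
    by move=> u; rewrite inE => -[->|->].
  have my : minimum_of R [pred u | `[< u = x \/ u = y >]] y.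
    split; first by rewrite inE; right.
    by move=> u; rewrite inE => -[->|->].
  by rewrite -(uniq _ mx) -(uniq _ my).
have Rtrans : forall x y z, R x y -> R y z -> R x z.
  move=> x y z rxy ryz.
  have [w [[->|[->|->]] h]] := minP (fun u => u = x \/ u = y \/ u = z) (ex_intro _ x (or_introl erefl)).
  - by apply: h; right; right.
  - by have -> := Ranti _ _ rxy (h x (or_introl erefl)).
  - by have <- := Ranti _ _ ryz (h y (or_intror (or_introl erefl))).
pose lt x y := R x y /\ x <> y.
have wf : well_founded lt.
  move=> x; apply: contrapT => nacc.
  have [z [nz hz]] := minP (fun u => ~ Acc lt u) (ex_intro _ x nacc).
  apply: nz; constructor => y [ryz neq]; apply: contrapT => ny.
  by apply: neq; apply: Ranti => //; apply: hz.
have tot : forall q r, q = r \/ lt q r \/ lt r q.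
  move=> q r; case: (pselect (q = r)) => [|ne]; first by left.
  by right; case: (Rtot q r) => h; [left | right]; split => // /esym.
case: (pselect (exists p, ~ countable [set r | lt r p])) => [ex|nex].
- have [p0 [np0 hp0]] := minP _ ex.
  have Dmseg : forall q, lt q p0 ->
      countable [set r | lt r q] /\ forall r, lt r q -> lt r p0.
    move=> q [rq nq]; split.
      apply: contrapT => nc; apply: nq; apply: Ranti => //; exact: hp0.
    move=> r [rr nr]; split; first exact: Rtrans rr rq.
    by move=> e; subst r; apply: nq; apply: Ranti.
  case: (ch [set q | lt q p0]) => [Dc|De]; first by [].
  have : ([set: set nat] #<= [set q | lt q p0])%card by move: De => /card_eqPle [].
  move=> /pcard_surjP [gg hgg].
  exists lt, [set q | lt q p0], (fun q => s0 (gg q)); split.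
  + exact: wf.
  + exact: Dmseg.
  + by move=> q r _ _; apply: tot.
  + move=> p; have [S <-] := s0s p; have [q Dq <-] := hgg S I.
    by exists q.
- exists lt, setT, s0; split.
  + exact: wf.
  + move=> q _; split => //; apply: contrapT => nc; apply: nex; by exists q.
  + by move=> q r _ _; apply: tot.
  + by move=> p; have [S <-] := s0s p; exists S; split.
Qed.


Definition nbhdN AD (n : nat) : set (mpt AD) := [set q | q = MN n].
Definition nbhdA AD (C F : set nat) : set (mpt AD) := fun q =>
  match q with MN m => C m /\ ~ F m | MA C' _ => C' = C | MInf => False end.
Definition nbhdI AD (F : set nat) (G : set (set nat)) : set (mpt AD) := fun q =>
  match q with
  | MN m => ~ F m /\ ~ (exists C, G C /\ C m)
  | MA C _ => ~ G C | MInf => True end.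
Arguments nbhdN : clear implicits.
Arguments nbhdA : clear implicits.
Arguments nbhdI : clear implicits.

Lemma open_N AD n : @mopen AD (nbhdN AD n).
Proof. by move=> p ->; exists (nbhdN AD n); split. Qed.

Lemma open_A AD C (hC : AD C) F : finite_set F -> @mopen AD (nbhdA AD C F).
Proof.
move=> fF [m|C' h'|] //= Up.
- by exists (nbhdN AD m); split => // q ->.
- subst C'; exists (nbhdA AD C F); split => //; by exists F.
Qed.

Lemma open_I AD F G : AD_family AD -> finite_set F -> finite_set G -> G `<=` AD ->
  @mopen AD (nbhdI AD F G).
Proof.
move=> [_ _ ad] fF fG GA [m|C' h'|] //= Up.
- by exists (nbhdN AD m); split => // q ->.
- exists (nbhdA AD C' (F `|` [set m | C' m /\ exists C, G C /\ C m])); split.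
    exists (F `|` [set m | C' m /\ exists C, G C /\ C m]); split => //.
    rewrite finite_setU; split => //.
    apply: (sub_finite_set _ (fin_union (D := G) (F := fun C => C' `&` C) fG _)).
      by move=> m [C'm [C [GC Cm]]]; exists C.
    move=> C GC; apply: ad => //; first exact: GA.
    by move=> e; subst C.
  move=> [m|C'' h''|] //=.
    move=> [C'm nF]; split; first by move=> Fm; apply: nF; left.
    by move=> ex; apply: nF; right.
  by move=> ->.
- exists (nbhdI AD F G); split => //; by exists F, G.
Qed.

Lemma disj T (U V : set T) : (forall q, U q -> V q -> False) -> U `&` V = set0.
Proof. by move=> h; apply/seteqP; split => // q [Uq Vq]; case: (h q Uq Vq). Qed.

Lemma mhausdorff AD : AD_family AD -> hausdorff_opens (@mopen AD).
Proof.
move=> hAD.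
have [_ _ ad] := hAD.
have sym : forall p q : mpt AD, (exists U V, [/\ @mopen AD U, @mopen AD V, U q, V p & U `&` V = set0]) ->
    exists U V, [/\ @mopen AD U, @mopen AD V, U p, V q & U `&` V = set0].
  by move=> p q [U [V [oU oV Uq Vp UV]]]; exists V, U; split => //; rewrite setIC.
have NA : forall n C (h : AD C), exists U V, [/\ @mopen AD U, @mopen AD V, U (MN n), V (MA h) & U `&` V = set0].
  move=> n C h; exists (nbhdN AD n), (nbhdA AD C [set n]); split => //.
  - exact: open_N.
  - by apply: open_A => //; apply: finite_set1.
  - by apply: disj => q -> [_]; apply.
have NI : forall n, exists U V, [/\ @mopen AD U, @mopen AD V, U (MN n), V MInf & U `&` V = set0].
  move=> n; exists (nbhdN AD n), (nbhdI AD [set n] set0); split => //.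
  - exact: open_N.
  - by apply: open_I => //; apply: finite_set1.
  - by apply: disj => q -> [] nn _; apply: nn.
have AI : forall C (h : AD C), exists U V, [/\ @mopen AD U, @mopen AD V, U (MA h), V MInf & U `&` V = set0].
  move=> C h; exists (nbhdA AD C set0), (nbhdI AD set0 [set C]); split => //.
  - exact: open_A.
  - apply: open_I => //; try exact: finite_set1.
    by move=> D ->.
  - apply: disj => -[m|D h'|] //=.
      by move=> [Cm _] [_]; apply; exists C.
move=> [n|C h|] [n'|C' h'|] // neq.
- exists (nbhdN AD n), (nbhdN AD n'); split; [exact: open_N | exact: open_N | by [] | by [] | ].
  by apply: disj => q -> [e]; apply: neq; rewrite e.
- exact: sym (NA _ _ _).
- have neC : C <> C'.
    by move=> e; subst C'; apply: neq; congr MA; apply: Prop_irrelevance.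
  exists (nbhdA AD C (C `&` C')), (nbhdA AD C' set0); split => //.
  + by apply: open_A => //; apply: ad.
  + exact: open_A.
  + apply: disj => -[m|D h''|] //=.
      by move=> [Cm nCC] [C'm _]; apply: nCC.
    by move=> -> e.
- exact: sym (NI _).
- exact: sym (AI _ _).
Qed.

Lemma conv_const X AD (x : X -> mpt AD) A p :
  (forall n, A n -> x n = p) -> conv_on (@mopen AD) x A p.
Proof.
move=> h U _ Up; apply: empty_fin => n [An nU]; apply: nU; by rewrite h.
Qed.

Lemma conv_A X AD (x : X -> mpt AD) A C (hC : AD C) (f : X -> nat) :
  (forall n, A n -> x n = MN (f n) /\ C (f n)) ->
  (forall m, finite_set [set n | A n /\ f n = m]) ->
  conv_on (@mopen AD) x A (MA hC).
Proof.
move=> hx hf U oU UC; have [V [[F [fF ->]] VU]] := oU _ UC.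
apply: (sub_finite_set _ (fin_union (D := F) (F := fun m => [set n | A n /\ f n = m]) fF _)) => //.
move=> n [An nU]; exists (f n); split => //.
apply: contrapT => nF; apply: nU; apply: VU; have [-> Cf] := hx n An; by split.
Qed.

Lemma conv_I X AD (x : X -> mpt AD) A :
  (forall n, A n -> x n = MInf \/ exists C (h : AD C), x n = MA h) ->
  (forall p, finite_set [set n | A n /\ x n = p]) ->
  conv_on (@mopen AD) x A MInf.
Proof.
move=> hx hf U oU UI; have [V [[F [G [fF fG GA ->]]] VU]] := oU _ UI.
apply: (sub_finite_set _ (fin_union (D := G)
   (F := fun C => [set n | A n /\ exists h : AD C, x n = MA h]) fG _)).
  move=> n [An nU]; case: (hx n An) => [e|[C [h e]]].
    by exfalso; apply: nU; apply: VU; rewrite e.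
  exists C; split; last by split => //; exists h.
  apply: contrapT => nG; apply: nU; apply: VU; by rewrite e.
move=> C GC; apply: (sub_finite_set _ (hf (MA (GA C GC)))).
move=> n [An [h e]]; split => //; rewrite e; congr MA; apply: Prop_irrelevance.
Qed.

Lemma nconv_N Y AD (e : Y -> nat) A n : injective e ->
  conv_on (@mopen AD) (fun y => MN (e y)) A (MN n) -> finite_set A.
Proof.
move=> ei hc; have h := hc _ (@open_N AD n) erefl.
have f1 := fin_preimage_inj (B := [set n]) ei (finite_set1 n).
have fU : finite_set ([set y | A y /\ ~ nbhdN AD n (MN (e y))] `|` [set y | [set n] (e y)]).
  by rewrite finite_setU.
apply: (sub_finite_set _ fU).
move=> y Ay; case: (pselect (e y = n)) => en; [right | left] => //.
by split => // -[].
Qed.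

Lemma nconv_A Y AD (e : Y -> nat) A C (h : AD C) :
  conv_on (@mopen AD) (fun y => MN (e y)) A (MA h) -> finite_set [set y | A y /\ ~ C (e y)].
Proof.
move=> hc; have := hc _ (open_A h (finite_set0 nat)) erefl.
by apply: sub_finite_set => y [Ay nC]; split => // -[].
Qed.

Lemma nconv_I Y AD (e : Y -> nat) A C : AD_family AD -> AD C ->
  conv_on (@mopen AD) (fun y => MN (e y)) A MInf -> finite_set [set y | A y /\ C (e y)].
Proof.
move=> hAD hC hc.
have := hc _ (open_I hAD (finite_set0 nat) (finite_set1 C) (fun D (e : D = C) => eq_ind_r AD hC e)) I.
apply: sub_finite_set => y [Ay Cy]; split => // -[_]; apply; by exists C.
Qed.


Lemma id_seqUF X (T : eqType) (I : set (set X)) (F : T -> set X) (s : seq T) : is_ideal I ->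
  (forall C, C \in s -> I (F C)) -> I [set x | exists C, C \in s /\ F C x].
Proof.
move=> hI; elim: s => [|C s IH] h.
  by apply: idF => //; apply: (sub_finite_set _ (finite_set0 X)) => x [C []].
apply: (idU3 hI (B := F C) (C := [set x | exists C, C \in s /\ F C x])).
- move=> x [D [Ds Dx]]; rewrite in_cons in Ds; case/orP: Ds => [/eqP <-|Ds]; [by left|by right; exists D].
- by apply: h; rewrite in_cons eqxx.
- by apply: IH => D Ds; apply: h; rewrite in_cons Ds orbT.
Qed.

Lemma good_inf X Y (I : set (set X)) (J : set (set Y)) e c h A :
  is_ideal I -> good_c1 I J e c h A -> infinite_set (imgl h A).
Proof.
move=> hI [nA Al Af _ _] fimg; apply: (id_infinite hI nA).
apply: (sub_finite_set _ (fin_union (D := imgl h A) (F := fun m => [set x | A x /\ h x = inl m]) fimg _)).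
  by move=> x Ax; have [m hm] := Al x Ax; exists m; split => //; exists x.
by move=> m _; apply: Af.
Qed.

Lemma Bexists X Y (I : set (set X)) (J : set (set Y)) (e : Y -> nat) (iota : X -> nat) (y0 : Y) B :
  is_ideal I -> is_ideal J -> (forall A, ~ I A -> ~ katetov_le_restr J I A) ->
  injective iota -> injective e -> ~ J (e @^-1` B) ->
  exists B', [/\ B' `<=` B, infinite_set B' & J (e @^-1` B')].
Proof.
move=> hI hJ hK iotai ei nJ.
pose Z := e @^-1` B.
have [Z' [sZ iZ JZ]] : exists Z', [/\ Z' `<=` Z, infinite_set Z' & J Z'].
  apply: contrapT => hn.
  have fin : forall W, W `<=` Z -> J W -> finite_set W.
    move=> W sW JW; apply: contrapT => iW; apply: hn; by exists W.
  have iZ := id_infinite hJ nJ.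
  pose T := e @` Z.
  have iT : infinite_set T by apply: inj_infinite.
  pose psi k := choose_or y0 (fun y => Z y /\ rk T (e y) = k).
  have psiP : forall k, Z (psi k) /\ rk T (e (psi k)) = k.
    move=> k; apply: (@choose_orP _ y0 (fun y => Z y /\ rk T (e y) = k)); have [m [[y Zy <-] rm]] := rk_surj iT k; by exists y.
  have psi_inj : injective psi.
    move=> k k' eq; rewrite -(proj2 (psiP k)) -(proj2 (psiP k')) eq //.
  apply: (hK setT (idT hI)); exists (fun x => psi (iota x)) => B0 JB0.
  have f0 : finite_set (B0 `&` Z) by apply: fin => //; apply: (idS hJ _ JB0) => y [].
  have f1 := fin_preimage_inj psi_inj f0.
  have f2 := fin_preimage_inj iotai f1.
  exists (setT `&` (fun x => psi (iota x)) @^-1` B0).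
    apply: idF => //; apply: (sub_finite_set _ f2) => x [_ Bx]; split => //.
    exact: (proj1 (psiP _)).
  by rewrite setIT.
exists (e @` Z'); split.
- by move=> m [y Zy <-]; apply: sZ.
- exact: inj_infinite.
- apply: (idS hJ _ JZ) => y [y' Zy' ey]; by rewrite -(ei _ _ ey).
Qed.


Lemma build X Y (I : set (set X)) (J : set (set Y)) (e : Y -> nat) (g : nat -> Y)
  (iota : X -> nat) (lt : set nat -> set nat -> Prop) (Dm : set (set nat))
  (s : set nat -> (X -> nat + nat) * set nat) (x0 : X) (y0 : Y) :
  is_ideal I -> is_ideal J -> unboring I -> (forall A, ~ I A -> ~ katetov_le_restr J I A) ->
  injective iota -> injective e -> (forall y, g (e y) = y) ->
  well_founded lt ->
  (forall q, Dm q -> countable [set r | lt r q] /\ forall r, lt r q -> Dm r) ->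
  (forall q r, Dm q -> Dm r -> q = r \/ lt q r \/ lt r q) ->
  (forall p, exists q, Dm q /\ s q = p) ->
  exists AD, AD_family AD /\ FinBW I (@mopen AD) /\ ~ FinBW J (@mopen AD).
Proof.
move=> hI hJ unb hK iotai ei ge wf segs tot ssurj.
pose goodB (c : nat -> set nat) (D B B' : set nat) :=
  [/\ ~ J (e @^-1` B), (forall k, finite_set (B `&` c k)), finite_set (B `&` D),
      B' `<=` B & infinite_set B' /\ J (e @^-1` B')].
pose fq q := choose_or (fun _ : set nat => 0%N)
   (fun f => forall r r', lt r q -> lt r' q -> f r = f r' -> r = r').
pose F := fun q (rec : forall r, lt r q -> bool -> set nat) (b : bool) =>
  let c := fun n => choose_or set0
     (fun C => exists r (hr : lt r q), fq q r = n./2 /\ C = rec r hr (odd n)) in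
  let D := imgl (s q).1 (choose_or set0 (good_c1 I J e c (s q).1)) in
  if b then D else choose_or set0 (goodB c D (s q).2).
pose out := Fix wf (fun _ => bool -> set nat) F.
have out_eq : forall q, out q = F q (fun r _ => out r).
  move=> q; rewrite /out; apply: Fix_eq => q0 f1 f2 hf.
  have -> : f1 = f2.
    apply: functional_extensionality_dep => r.
    by apply: functional_extensionality_dep => hr; apply: hf.
  by [].
pose cq q n := choose_or set0
   (fun C => exists r (hr : lt r q), fq q r = n./2 /\ C = out r (odd n)).
pose Dq q := imgl (s q).1 (choose_or set0 (good_c1 I J e (cq q) (s q).1)).
have outT : forall q, out q true = Dq q by move=> q; rewrite out_eq.
have outF : forall q, out q false = choose_or set0 (goodB (cq q) (Dq q) (s q).2).
  by move=> q; rewrite out_eq.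
have fq_inj : forall q, Dm q -> forall r r', lt r q -> lt r' q -> fq q r = fq q r' -> r = r'.
  move=> q Dq0.
  apply: (@choose_orP _ (fun _ => 0%N) (fun f => forall r r', lt r q -> lt r' q -> f r = f r' -> r = r')).
  have [cs _] := segs q Dq0; have /countable_injP [f hf] := cs.
  exists f => r r' hr hr' ef; apply: hf => //; exact: mem_set.
have c_in : forall q n, cq q n = set0 \/ exists r b, lt r q /\ cq q n = out r b.
  move=> q n; rewrite /cq.
  case: (choose_or_cases set0 (fun C => exists r (hr : lt r q), fq q r = n./2 /\ C = out r (odd n)))
    => [[r [hr [_ ->]]]|->]; [right; exists r, (odd n) | left] => //.
have c_all : forall q, Dm q -> forall r b, lt r q -> exists n, cq q n = out r b.
  move=> q Dq0 r b hr; exists ((fq q r).*2 + b)%N; rewrite /cq.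
  set n := ((fq q r).*2 + b)%N.
  have hn2 : n./2 = fq q r by rewrite /n addnC half_bit_double.
  have hno : odd n = b by rewrite /n oddD odd_double /=; case: (b).
  have ex : exists C, exists r' (hr' : lt r' q), fq q r' = n./2 /\ C = out r' (odd n).
    by exists (out r b), r, hr; rewrite hn2 hno.
  have [r' [hr' [e1 ->]]] := choose_orP set0 ex.
  by rewrite hno (fq_inj q Dq0 r' r hr' hr) // e1 hn2.
have Tgood : forall q, (exists m, out q true m) ->
    good_c1 I J e (cq q) (s q).1 (choose_or set0 (good_c1 I J e (cq q) (s q).1)).
  move=> q [m]; rewrite outT /Dq.
  case: (choose_or_cases set0 (good_c1 I J e (cq q) (s q).1)) => [//|->].
  by move=> [x [[] _]].
have Fgood : forall q, (exists m, out q false m) -> goodB (cq q) (Dq q) (s q).2 (out q false).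
  move=> q [m Om]; rewrite outF in Om *.
  case: (choose_or_cases set0 (goodB (cq q) (Dq q) (s q).2)) => [//|E].
  by rewrite E in Om.
pose AD := [set C | exists q b, [/\ Dm q, C = out q b & exists m, C m]].
have AD_J : forall C, AD C -> J (e @^-1` C).
  move=> C [q [[] [Dq0 -> ne]]].
  - by have [_ _ _ hJ' _] := Tgood q ne; rewrite outT.
  - by have [_ _ _ _ []] := Fgood q ne.
have AD_inf : forall C, AD C -> infinite_set C.
  move=> C [q [[] [Dq0 -> ne]]].
  - by rewrite outT; exact: good_inf hI (Tgood q ne).
  - by have [_ _ _ _ []] := Fgood q ne.
have later : forall q r b b', Dm q -> lt r q -> (exists m, out q b m) ->
    finite_set (out q b `&` out r b').
  move=> q r b b' Dq0 hr ne; have [n en] := c_all q Dq0 r b' hr; rewrite -en.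
  case: b ne => ne.
  - by have [_ _ _ _ ad] := Tgood q ne; rewrite outT; apply: ad.
  - have [_ h1 _ sub _] := Fgood q ne; apply: (sub_finite_set _ (h1 n)) => m [om cm].
    by split => //; apply: sub.
have same : forall q, (exists m, out q false m) -> finite_set (out q false `&` out q true).
  move=> q ne; have [_ _ h2 sub _] := Fgood q ne; rewrite outT.
  by apply: (sub_finite_set _ h2) => m [om dm]; split => //; apply: sub.
have MAD : forall B, ~ J (e @^-1` B) -> exists C, AD C /\ infinite_set (B `&` C).
  move=> B nB; have [q [Dq0 sq]] := ssurj ((fun _ => inl 0%N), B).
  have sq2 : (s q).2 = B by rewrite sq.
  case: (pselect (exists n, infinite_set (B `&` cq q n))) => [[n inf]|fn].
    case: (c_in q n) => [e0|[r [b [hr en]]]].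
      by exfalso; apply: inf; rewrite e0 setI0; exact: finite_set0.
    exists (cq q n); split => //; exists r, b; split => //.
      exact: (proj2 (segs q Dq0) r hr).
    by have [m [_ cm]] := infinite_setN0 inf; exists m.
  case: (pselect (infinite_set (B `&` Dq q))) => [inf|fD].
    exists (Dq q); split => //; exists q, true; rewrite outT; split => //.
    by have [m [_ cm]] := infinite_setN0 inf; exists m.
  have [B' [sB iB JB]] := Bexists y0 hI hJ hK iotai ei nB.
  have gB : goodB (cq q) (Dq q) (s q).2 (choose_or set0 (goodB (cq q) (Dq q) (s q).2)).
    apply: choose_orP; exists B'; rewrite sq2; split => //.
    + by move=> k; apply: fin_notinf => h; apply: fn; exists k.
    + exact: fin_notinf.
  rewrite -outF in gB; have [_ _ _ sub [iB2 _]] := gB.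
  exists (out q false); split.
    exists q, false; split => //.
    by have [m ?] := infinite_setN0 iB2; exists m.
  apply: (sub_infinite_set _ iB2) => m om; split => //; rewrite -sq2; exact: sub.
have hAD : AD_family AD.
  split.
  - move=> /finite_seqP [sAD eAD].
    pose U := [set m | exists C, C \in sAD /\ C m].
    have JU : J (e @^-1` U).
      have H : J [set y | exists C, C \in sAD /\ (e @^-1` C) y].
        by apply: id_seqUF => // C Cs; apply: AD_J; rewrite eAD.
      by apply: (idS hJ _ H) => y [C [Cs Cm]]; exists C.
    have nB : ~ J (e @^-1` (~` U)).
      move=> JB; apply: (idT hJ).
      apply: (idU3 hJ (B := e @^-1` U) (C := e @^-1` (~` U))) => //.
      by move=> y _; case: (pselect (U (e y))) => h; [left|right].
    have [C [ADC inf]] := MAD _ nB; apply: inf.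
    have Cs : C \in sAD by move: ADC; rewrite eAD.
    by apply: empty_fin => m [nU Cm]; apply: nU; exists C.
  - exact: AD_inf.
  - move=> C C' [q [b [Dq0 -> ne]]] [q' [b' [Dq0' -> ne']]] neq.
    case: (tot q q' Dq0 Dq0') => [eqq|[l|l]].
    + subst q'; case: b b' ne ne' neq => [] [] ne ne' neq //.
      * by rewrite setIC; apply: same.
      * by apply: same.
    + by rewrite setIC; apply: later.
    + by apply: later.
exists AD; split => //; split.
- split; first exact: mhausdorff.
  move=> x.
  pose hx (p : mpt AD) : nat + nat := match p with
    | MN m => inl m | MInf => inr 0%N
    | MA _ _ => inr (iota (choose_or x0 (fun n => x n = p))).+1 end.
  pose h n := hx (x n).
  have hfib : forall n n', h n = h n' -> x n = x n'.
    move=> n n'; rewrite /h /hx; case En: (x n) => [m|C hC|]; case En': (x n') => [m'|C' hC'|] //=.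
    - by move=> [->].
    - move=> [/iotai eq].
      have P1 := choose_orP x0 (ex_intro (fun k => x k = MA hC) n En).
      have P2 := choose_orP x0 (ex_intro (fun k => x k = MA hC') n' En').
      by rewrite -P1 eq P2.
  have [q [Dq0 sq]] := ssurj (h, set0).
  have sq1 : (s q).1 = h by rewrite sq.
  pose f n := match h n with inl m => m | inr _ => 0%N end.
  have hinl : forall n m, h n = inl m -> x n = MN m /\ f n = m.
    move=> n m hn; rewrite /f hn; split => //; move: hn; rewrite /h /hx.
    by case: (x n) => [m'|C hC|] //= [->].
  case: (@stepS X Y I J e g iota (cq q) h hI hJ unb hK iotai ge)
    => [[z nz]|[[k [A [nA fA hA]]]|[[A gA]|[A [nA fA hA]]]]].
  + have [n0 hn0] := id_nonempty hI nz.
    exists [set n | h n = z]; split => //; exists (x n0).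
    by apply: conv_const => n hn; apply: hfib; rewrite hn hn0.
  + have [n0 An0] := id_nonempty hI nA; have [m0 [_ cm0]] := hA n0 An0.
    have ADc : AD (cq q k).
      case: (c_in q k) => [e0|[r [b [hr en]]]]; first by rewrite e0 in cm0.
      exists r, b; split => //; first exact: (proj2 (segs q Dq0) r hr).
      by exists m0.
    exists A; split => //; exists (MA ADc); apply: (conv_A (f := f)).
      move=> n An; have [m [hm cm]] := hA n An; have [-> ->] := hinl _ _ hm; by [].
    move=> m; apply: (sub_finite_set _ (fA (inl m))) => n [An fn]; split => //.
    by have [m' [hm _]] := hA n An; have [_ fm] := hinl _ _ hm; rewrite hm -fm fn.
  + have gq : good_c1 I J e (cq q) (s q).1 (choose_or set0 (good_c1 I J e (cq q) (s q).1)).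
      by apply: choose_orP; exists A; rewrite sq1.
    move: gq; set A' := choose_or set0 _ => gq.
    have [nA' Al' Af' _ _] := gq.
    have oT : out q true = imgl h A' by rewrite outT /Dq -/A' sq1.
    have ne : exists m, out q true m.
      have [n0 An0] := id_nonempty hI nA'; have [m hm] := Al' n0 An0.
      by rewrite oT; exists m, n0; rewrite -sq1.
    have ADc : AD (out q true) by exists q, true.
    exists A'; split => //; exists (MA ADc); apply: (conv_A (f := f)).
      move=> n An; have [m hm] := Al' n An; rewrite sq1 in hm.
      have [-> ->] := hinl _ _ hm; split => //; rewrite oT; by exists n.
    move=> m; apply: (sub_finite_set _ (Af' (inl m))) => n [An fn]; split => //.
    have [m' hm] := Al' n An; rewrite sq1 in hm *.
    by have [_ fm] := hinl _ _ hm; rewrite hm -fm fn.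
  + exists A; split => //; exists MInf; apply: conv_I.
    * move=> n An; have [k hk] := hA n An; move: hk; rewrite /h /hx.
      by case: (x n) => [m|C hC|] //= _; [right; exists C, hC | left].
    * move=> p; apply: (sub_finite_set _ (fA (hx p))) => n [An xn]; split => //.
      by rewrite /h xn.
- move=> [_ hall]; have [A [nA [p cp]]] := hall (fun y => MN (e y)).
  case: p cp => [n|C hC|] cp.
  + by apply: nA; apply: idF => //; exact: nconv_N ei cp.
  + have fC := nconv_A cp; apply: nA.
    apply: (idU3 hJ (B := [set y | A y /\ ~ C (e y)]) (C := e @^-1` C)).
    * by move=> y Ay; case: (pselect (C (e y))) => h; [right|left].
    * exact: idF.
    * exact: AD_J hC.
  + have nB : ~ J (e @^-1` (e @` A)).
      by move=> JB; apply: nA; apply: (idS hJ _ JB) => y Ay; exists y.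
    have [C [ADC inf]] := MAD _ nB; have fC := nconv_I hAD ADC cp.
    apply: inf; apply: (sub_finite_set _ (finite_image e fC)) => m [[y Ay <-] Cm].
    by exists y.
Qed.


Lemma s0_exists X (iota : X -> nat) : injective iota ->
  exists s0 : set nat -> (X -> nat + nat) * set nat, forall p, exists S, s0 S = p.
Proof.
move=> iotai.
pose dec (m : nat) : nat + nat := if odd m then inr m./2 else inl m./2.
pose enc (z : nat + nat) : nat := match z with inl m => m.*2 | inr k => k.*2.+1 end.
have dec_enc : forall z, dec (enc z) = z.
  move=> [m|k]; rewrite /dec /enc.
  - by rewrite odd_double doubleK.
  - by rewrite /= odd_double /= uphalf_double.
pose s0 (S : set nat) := ((fun x => dec (choose_or 0%N (fun m => S (pickle (true, (iota x, m)))))),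
                          (fun n : nat => S (pickle (false, (n, 0%N))))).

have pinj : injective (@pickle (bool * (nat * nat))%type) := pcan_inj pickleK.
exists s0 => -[h B].
pose S := [set k | (exists x, k = pickle (true, (iota x, enc (h x)))) \/
                   (exists n, B n /\ k = pickle (false, (n, 0%N)))].
exists S; rewrite /s0; congr pair.
- apply: funext => x.
  have ex : exists m : nat, S (pickle (true, (iota x, m))) by exists (enc (h x)); left; exists x.
  have := choose_orP 0%N ex; case => [[x' /pinj [/iotai -> ->]]|[n [_ /pinj]]] //.
- apply: funext => n; apply: propext; split.
  + by case => [[x /pinj]|[n' [Bn' /pinj [->]]]].
  + by move=> Bn; right; exists n.
Qed.


Lemma inj_of_countable T : countable [set: T] -> exists f : T -> nat, injective f.
Proof.
move=> /countable_injP [f hf]; exists f => a b eab.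
by apply: hf => //; rewrite in_setT.
Qed.

Arguments inj_of_countable {T}.
Unset Implicit Arguments.

Theorem theorem9p1 (X Y : Type) (I : set (set X)) (J : set (set Y)) :
  CH ->
  countable [set: X] -> infinite_set [set: X] ->
  countable [set: Y] -> infinite_set [set: Y] ->
  is_ideal I -> is_ideal J ->
  unboring I ->
  (forall A : set X, ~ I A -> ~ katetov_le_restr J I A) ->
  exists AD : set (set nat),
    AD_family AD /\ FinBW I (@mopen AD) /\ ~ FinBW J (@mopen AD).
Proof.
move=> ch cX iX cY iY hI hJ unb hK.
have [iota iotai] := inj_of_countable cX.
have [e ei] := inj_of_countable cY.
have [x0 _] := id_nonempty hI (idT hI).
have [y0 _] := id_nonempty hJ (idT hJ).
pose g n := choose_or y0 (fun y => e y = n).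
have ge : forall y, g (e y) = y.
  move=> y; apply: ei; rewrite /g.
  exact: (choose_orP y0 (ex_intro (fun y' => e y' = e y) y erefl)).
have [s0 s0s] := s0_exists iotai.
have [lt [Dm [s [wf segs tot ssurj]]]] := index_exists s0s ch.
exact: (build x0 y0 hI hJ unb hK iotai ei ge wf segs tot ssurj).
Qed.
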